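(* Let $k\in\{1,\dots,n\}$ and let $R$ be a $k$-upper run of an $n$-DPDA. Then $R$ is $(k-1)$-upper if and only if $|\mathrm{top}^k(R(0))|\le|\mathrm{top}^k(R(i))|$ for every $i\in\{0,\dots,|R|\}$ such that $R[i,|R|]$ is $k$-upper.
   Context: Stacks: fix order $n\ge1$, finite stack alphabet $\Gamma$. A $0$-stack is $(\gamma,x)$ with $\gamma\in\Gamma$, $x=(x_n,\dots,x_1)$ a vector of $n$ positive integers (position). For $k\in\{1,\dots,n\}$ a $k$-stack is a finite list $[s_1,\dots,s_m]$ ($m\ge0$) of nonempty $(k-1)$-stacks such that for some $x_n,\dots,x_{k+1}$, every position in $s_i$ has the form $(x_n,\dots,x_{k+1},i,y_{k-1},\dots,y_1)$. The top is at the right; $|s^k|$ is the number of $(k-1)$-stacks in $s^k$; $s^k:s^{k-1}$ appends at the top (right-associative); for $s^r=t^r:t^{r-1}:\dots:t^k$, $\mathrm{top}^k(s^r)=t^k$. Equality of stacks includes positions. For $k<n$, $\mathsf p_{+1}(s^k)$ adds $1$ to the $(n-k)$-th coordinate of all positions. Operations of order $k\ge1$: $\mathsf{pop}^k(s^r:\dots:s^k:s^{k-1})=s^r:\dots:s^k$, defined only if the topmost $k$-stack has at least two $(k-1)$-stacks; $\mathsf{push}^k_\gamma(s^r:\dots:s^0)=s^r:\dots:s^{k+1}:(s^k:\dots:s^0):\mathsf p_{+1}(s^{k-1}:\dots:s^1:(\gamma,x))$ where $s^0=(\gamma',x)$. An $n$-DPDA has transitions determined by state and topmost stack symbol, each either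 $\mathrm{read}(\vec q)$ ($\vec q:A\to Q$ injective; leads to $(\vec q(a),s)$, reading $a$) or $(q,op)$ with $op$ a stack operation of order $\le n$ (leads to $(q,op(s))$ if defined). Configurations are (state, nonempty $n$-stack). A run is a finite sequence $R=c_0,\dots,c_m$ with each $c_i$ a successor of $c_{i-1}$; $R(i)=c_i$, $|R|=m$, $R[i,j]=c_i,\dots,c_j$. $\mathrm{top}^k(c)$ refers to the stack of $c$. History: for a run $R$ and a $0$-stack $s^0$ of $R(|R|)$, $\mathrm{hist}(R,s^0)$ is a $0$-stack of $R(0)$: if $|R|=0$ it is $s^0$; if $R=S\circ T$, $|T|=1$, and the last step is a read or a $\mathsf{pop}$, or a $\mathsf{push}^r_\gamma$ with $s^0$ not in the topmost $(r-1)$-stack of $R(|R|)$, it is $\mathrm{hist}(S,s^0)$; if the last step is $\mathsf{push}^r_\gamma$ and $s^0$ is in the topmost $(r-1)$-stack of $R(|R|)$, it is $\mathrm{hist}(S,t^0)$ with $t^0$ equal to $s^0$ with the $(n-r+1)$-th position coordinate decreased by $1$. For a $k$-stack $s^k$ of $R(|R|)$, $k\ge1$, $\mathrm{hist}(R,s^k)$ is the $k$-stack of $R(0)$ containing $\mathrm{hist}(R,s^0)$ for all $0$-stacks $s^0$ of $s^k$. For $k\in\{0,\dots,n\}$, $R$ is $k$-upper if $\mathrm{hist}(R,\mathrm{top}^k(R(|R|)))=\mathrm{top}^k(R(0))$. *)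

(* Defs.v *)
From mathcomp Require Import all_boot.
From Stdlib Require List.

Set Implicit Arguments.
Unset Strict Implicit.
Unset Printing Implicit Defensive.

(* Stacks.  A k-stack over alphabet G is a list (top at the RIGHT) of   *)
(* (k-1)-stacks; a 0-stack is a stack symbol.  Inside an n-stack the    *)
(* position (x_n,...,x_1) of every 0-stack is determined by the nesting *)
(* (x_j = 1-based index inside the enclosing j-stack), so positions are *)
(* represented as addresses [:: x_n; ...; x_1].          *)

Fixpoint stk (G : Type) (k : nat) : Type :=
  match k with 0 => G | k'.+1 => seq (stk G k') end.

Definition lastx (T : Type) (s : seq T) : option T :=
  match rev s with [::] => None | x :: _ => Some x end.

Definition droplast (T : Type) (s : seq T) : seq T := take (size s).-1 s.

Definition onthx (T : Type) (s : seq T) (i : nat) : option T :=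
  match drop i s with [::] => None | x :: _ => Some x end.

Fixpoint ne_stk (G : Type) (k : nat) : stk G k -> Prop :=
  match k return stk G k -> Prop with
  | 0 => fun _ => True
  | k'.+1 => fun s => s <> [::] /\ List.Forall (@ne_stk G k') s
  end.

Fixpoint topsym (G : Type) (k : nat) : stk G k -> option G :=
  match k return stk G k -> option G with
  | 0 => fun g => Some g
  | k'.+1 => fun s => match lastx s with Some t => @topsym G k' t | None => None end
  end.

Fixpoint settop (G : Type) (k : nat) (g : G) : stk G k -> stk G k :=
  match k return stk G k -> stk G k with
  | 0 => fun _ => g
  | k'.+1 => fun s => match lastx s with
                      | Some t => rcons (droplast s) (@settop G k' g t)
                      | None => s end
  end.

Fixpoint popk (G : Type) (k r : nat) : stk G k -> option (stk G k) :=
  match k return stk G k -> option (stk G k) with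
  | 0 => fun _ => None
  | k'.+1 => fun s =>
      if r == k'.+1 then (if 2 <= size s then Some (droplast s) else None)
      else match lastx s with
           | Some t => omap (fun t' => rcons (droplast s) t') (@popk G k' r t)
           | None => None end
  end.

Fixpoint pushk (G : Type) (k r : nat) (g : G) : stk G k -> option (stk G k) :=
  match k return stk G k -> option (stk G k) with
  | 0 => fun _ => None
  | k'.+1 => fun s =>
      match lastx s with
      | None => None
      | Some t =>
          if r == k'.+1 then Some (rcons s (@settop G k' g t))
          else omap (fun t' => rcons (droplast s) t') (@pushk G k' r g t)
      end
  end.

Fixpoint topsize (G : Type) (k j : nat) : stk G k -> nat :=
  match k return stk G k -> nat with
  | 0 => fun _ => 0
  | k'.+1 => fun s =>
      if j == k'.+1 then size s
      else match lastx s with Some t => @topsize G k' j t | None => 0 end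
  end.

Fixpoint toppos (G : Type) (k : nat) : stk G k -> seq nat :=
  match k return stk G k -> seq nat with
  | 0 => fun _ => [::]
  | k'.+1 => fun s => match lastx s with
                      | Some t => size s :: @toppos G k' t
                      | None => [::] end
  end.

Fixpoint is_pos (G : Type) (k : nat) : stk G k -> seq nat -> Prop :=
  match k return stk G k -> seq nat -> Prop with
  | 0 => fun _ x => x = [::]
  | k'.+1 => fun s x =>
      match x with
      | [::] => False
      | i :: x' => 0 < i /\ match onthx s i.-1 with
                            | Some t => @is_pos G k' t x'
                            | None => False end
      end
  end.

(* For an n-stack s: the 0-stack at position x lies in top^j(s) *)
Definition in_top (G : Type) (n j : nat) (s : stk G n) (x : seq nat) : Prop :=
  take (n - j) x = take (n - j) (toppos s).

Inductive stackop (G : Type) :=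
| Pop of nat
| Push of nat & G.

Inductive trans (Q A G : Type) :=
| TRead of (A -> Q)
| TOp of Q & stackop G.

Record dpda (Q A G : finType) := DPDA { delta : Q -> G -> trans Q A G }.

Definition wf_dpda (Q A G : finType) (n : nat) (D : dpda Q A G) : Prop :=
  forall q g, match delta D q g with
              | TRead f => injective f
              | TOp _ (Pop r) => 1 <= r <= n
              | TOp _ (Push r _) => 1 <= r <= n
              end.

Definition apply_op (G : Type) (n : nat) (op : stackop G) (s : stk G n)
  : option (stk G n) :=
  match op with Pop r => popk r s | Push r g => pushk r g s end.

Definition config (Q G : Type) (n : nat) : Type := (Q * stk G n)%type.

Definition succ (Q A G : finType) (n : nat) (D : dpda Q A G)
  (c c' : config Q G n) : Prop :=
  match topsym c.2 with
  | None => False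
  | Some g =>
      match delta D c.1 g with
      | TRead f => exists a, c' = (f a, c.2)
      | TOp q op => exists s', apply_op op c.2 = Some s' /\ c' = (q, s')
      end
  end.

Record run (Q G : Type) (n : nat) := Run { r0 : config Q G n; rs : seq (config Q G n) }.

Definition rlen (Q G : Type) (n : nat) (R : run Q G n) : nat := size (rs R).

Definition rat (Q G : Type) (n : nat) (R : run Q G n) (i : nat) : config Q G n :=
  nth (r0 R) (r0 R :: rs R) i.

Definition subrun_from (Q G : Type) (n : nat) (R : run Q G n) (i : nat) : run Q G n :=
  Run (rat R i) (drop i (rs R)).

Definition is_run (Q A G : finType) (n : nat) (D : dpda Q A G) (R : run Q G n) : Prop :=
  (forall i, i <= rlen R -> ne_stk (rat R i).2) /\
  (forall i, i < rlen R -> succ D (rat R i) (rat R i.+1)).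

(* history of one step c -> c' : position in c' |-> position in c *)
Definition hist_step (Q A G : finType) (n : nat) (D : dpda Q A G)
  (c c' : config Q G n) (x : seq nat) : seq nat :=
  match topsym c.2 with
  | None => x
  | Some g =>
      match delta D c.1 g with
      | TOp _ (Push r _) =>
          if take (n - r + 1) x == take (n - r + 1) (toppos c'.2)
          (* x lies in the topmost (r-1)-stack of c' : decrease the
             (n-r+1)-th coordinate (0-based index n-r) *)
          then set_nth 0 x (n - r) (nth 0 x (n - r)).-1
          else x
      | _ => x
      end
  end.

(* hist(R, x) : position in R(0) of the history of the 0-stack at x in R(|R|) *)
Definition hist (Q A G : finType) (n : nat) (D : dpda Q A G) (R : run Q G n)
  (x : seq nat) : seq nat :=
  foldr (fun st y => hist_step D st.1 st.2 y) x
        (zip (r0 R :: rs R) (rs R)).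

Definition upper (Q A G : finType) (n : nat) (D : dpda Q A G) (k : nat)
  (R : run Q G n) : Prop :=
  forall x, is_pos (rat R (rlen R)).2 x -> in_top k (rat R (rlen R)).2 x ->
            in_top k (r0 R).2 (hist D R x).

(* Main.v *)
Require Import Defs.
From mathcomp Require Import all_boot zify.
Set Implicit Arguments. Unset Strict Implicit. Unset Printing Implicit Defensive.

Lemma lastx_rcons T (p : seq T) x : lastx (rcons p x) = Some x.
Proof. by rewrite /lastx rev_rcons. Qed.

Lemma droplast_rcons T (p : seq T) x : droplast (rcons p x) = p.
Proof. by rewrite /droplast size_rcons /= -cats1 take_size_cat. Qed.

Lemma onthxE T (s : seq T) i : onthx s i = nth None (map Some s) i.
Proof. by elim: s i => [|a s IH] [|i] //=; rewrite -IH. Qed.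

Lemma onthx_rcons T (p : seq T) x i :
  onthx (rcons p x) i = if i < size p then onthx p i else if i == size p then Some x else None.
Proof. by rewrite !onthxE map_rcons nth_rcons size_map. Qed.

Lemma onthx_lt T (p : seq T) i t : onthx p i = Some t -> i < size p.
Proof. rewrite onthxE; case: ltnP => // H; by rewrite nth_default // size_map. Qed.

Lemma Forall_rcons T (P : T -> Prop) p x : List.Forall P (rcons p x) -> P x.
Proof. elim: p => [|a p IH] /= H; inversion H => //; exact: IH. Qed.

Lemma ne_toppos_pos G k (s : stk G k) : ne_stk s -> is_pos s (toppos s).
Proof.
elim: k s => [|k IH] s //=.
case: (lastP s) => [|p t]; first by case.
move=> [_ HF]; rewrite lastx_rcons /= size_rcons; split => //.
rewrite onthx_rcons ltnn eqxx; apply: IH; exact: Forall_rcons HF.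
Qed.

Lemma pos_size G k (s : stk G k) x : is_pos s x -> size x = k.
Proof.
elim: k s x => [|k IH] s x /=; first by move->.
case: x => [|i x] //= [_]; case E: onthx => [t|] // H; by rewrite (IH _ _ H).
Qed.

Lemma toppos_size G k (s : stk G k) : ne_stk s -> size (toppos s) = k.
Proof. move=> H; exact: pos_size (ne_toppos_pos H). Qed.

Lemma pos_le G k (s : stk G k) x j : is_pos s x -> take j x = take j (toppos s) ->
  j < k -> nth 0 x j <= nth 0 (toppos s) j.
Proof.
elim: k s x j => [|k IH] s x j //=.
case: x => [|i x] // [Hi]; case E: onthx => [t|] // Ht.
case: (lastP s) E => [|p u]; first by move=> E; have := onthx_lt E.
rewrite lastx_rcons size_rcons onthx_rcons => E.
case: j => [|j] /=.
  move=> _ _; move: E; case: ltnP => H1; [move=> _; lia|]; case: eqP => // H2 _; lia.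
case=> Hieq Htk Hj; move: E; rewrite Hieq -pred_Sn ltnn eqxx => -[Eu]; subst.
exact: IH.
Qed.

Lemma pop_pos G k r (s s' : stk G k) x : popk r s = Some s' -> is_pos s' x -> is_pos s x.
Proof.
elim: k r s s' x => [|k IH] r s s' x //=.
case: x => [|i x] //.
case: (lastP s) => [|p u].
  by case: (r == k.+1).
rewrite lastx_rcons droplast_rcons.
case: (r == k.+1).
  case: ifP => // _ [<-] [Hi]; case E: onthx => [t|] // Ht; split => //.
  by rewrite onthx_rcons (onthx_lt E) E.
case E1: popk => [t'|] //= [<-] [Hi Hm]; split => //; move: Hm; rewrite !onthx_rcons.
case: ifP => // _; case: (i.-1 == size p) => // H; exact: IH E1 H.
Qed.

Lemma settop_pos G k g (t : stk G k) x : is_pos (settop g t) x -> is_pos t x.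
Proof.
elim: k t x => [|k IH] t x //=.
case: (lastP t) => [|p u]; first by [].
rewrite lastx_rcons droplast_rcons; case: x => [|i x] //= [Hi Hm].
split => //; move: Hm; rewrite !onthx_rcons.
case: ifP => // _; case: (i.-1 == size p) => //; exact: IH.
Qed.

Lemma push_pos G k r g (s s' : stk G k) x : 1 <= r <= k -> pushk r g s = Some s' ->
  is_pos s' x ->
  is_pos s (if take (k - r + 1) x == take (k - r + 1) (toppos s')
            then set_nth 0 x (k - r) (nth 0 x (k - r)).-1 else x).
Proof.
elim: k r s s' x => [|k IH] r s s' x Hr; first by lia.
rewrite /=.
case: (lastP s) => [|p t] //; rewrite lastx_rcons droplast_rcons.
case: x => [|i x] //.
case: eqP => Hrk.
  move=> [<-]; rewrite lastx_rcons size_rcons /= Hrk subnn /= => -[Hi Hm].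
  case: eqP => Hie.
    case: Hie => Ei _; move: Hm; rewrite Ei !size_rcons /= !onthx_rcons ?size_rcons ltnn eqxx /=.
    rewrite ltnn eqxx => H; split => //; exact: settop_pos H.
  split => //; move: Hm; rewrite !onthx_rcons size_rcons.
  case: ifP => H1; first by [].
  case: eqP => // H2; exfalso; apply: Hie; rewrite size_rcons !take0; congr (_ :: _); move: Hi H2; clear; lia.
case E: pushk => [t'|] //= [<-]; rewrite lastx_rcons size_rcons /= => -[Hi Hm].
have Hr' : 1 <= r <= k by move: Hr Hrk; clear; lia.
have -> : k.+1 - r + 1 = (k - r + 1).+1 by lia.
have -> : k.+1 - r = (k - r).+1 by lia.
rewrite /= eqseq_cons.
case: (i =P (size p).+1) => Hie /=.
  subst i; move: Hm; rewrite onthx_rcons ltnn eqxx => Hm.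
  have := IH _ _ _ _ Hr' E Hm; case: ifP => _ H /=; split => //;
    by rewrite onthx_rcons ltnn eqxx.
split => //; move: Hm; rewrite !onthx_rcons.
case: ifP => // _; case: eqP => // H2; exfalso; apply: Hie; lia.
Qed.

Lemma push_top G k r g (s s' : stk G k) : 1 <= r <= k -> pushk r g s = Some s' ->
  take (k - r) (toppos s') = take (k - r) (toppos s) /\
  nth 0 (toppos s') (k - r) = (nth 0 (toppos s) (k - r)).+1.
Proof.
elim: k r s s' => [|k IH] r s s' Hr; first by lia.
rewrite /=.
case: (lastP s) => [|p t] //; rewrite lastx_rcons droplast_rcons.
case: eqP => Hrk.
  move=> [<-]; rewrite lastx_rcons !size_rcons /= Hrk subnn //.
case E: pushk => [t'|] //= [<-]; rewrite lastx_rcons size_rcons /=.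
have Hr' : 1 <= r <= k by move: Hr Hrk; clear; lia.
have -> : k.+1 - r = (k - r).+1 by lia.
case: (IH _ _ _ Hr' E) => H1 H2.
by rewrite /= H1 H2 size_rcons.
Qed.

Lemma topsize_toppos G k j (s : stk G k) : ne_stk s -> 1 <= j <= k ->
  topsize j s = nth 0 (toppos s) (k - j).
Proof.
elim: k s => [|k IH] s Hne Hj; first by lia.
rewrite /=.
case: (lastP s) Hne => [|p t]; first by case.
move=> [_ HF]; rewrite lastx_rcons.
case: eqP => Hjk; first by rewrite Hjk subnn.
have Hj' : 1 <= j <= k by move: Hj Hjk; clear; lia.
have -> : k.+1 - j = (k - j).+1 by lia.
by rewrite /= IH //; exact: Forall_rcons HF.
Qed.

Lemma hs_pos (Q A G : finType) (n : nat) (D : dpda Q A G) (c c' : config Q G n) x :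
  wf_dpda n D -> succ D c c' -> is_pos c'.2 x -> is_pos c.2 (hist_step D c c' x).
Proof.
move=> Hwf; rewrite /succ /hist_step.
case: (topsym c.2) => [g|] //.
have := Hwf c.1 g.
case: (delta D c.1 g) => [f|q [r|r g']] /=.
- by move=> _ [a ->].
- by move=> _ [s' [E ->]] /=; apply: pop_pos E.
- by move=> Hr [s' [E ->]] /= Hp; apply: push_pos Hr E Hp.
Qed.

Lemma hs_cases (Q A G : finType) (n : nat) (D : dpda Q A G) (c c' : config Q G n) x :
  wf_dpda n D -> succ D c c' ->
  hist_step D c c' x = x \/
  exists r g, [/\ 1 <= r <= n, pushk r g c.2 = Some c'.2,
     take (n - r + 1) x = take (n - r + 1) (toppos c'.2) &
     hist_step D c c' x = set_nth 0 x (n - r) (nth 0 x (n - r)).-1].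
Proof.
move=> Hwf; rewrite /succ /hist_step.
case: (topsym c.2) => [g|] //.
have := Hwf c.1 g.
case: (delta D c.1 g) => [f|q [r|r g']] /=; try by left.
move=> Hr [s' [E ->]] /=.
case: eqP => H; last by left.
by right; exists r, g'; split.
Qed.

Lemma hs_nth_le (Q A G : finType) (n : nat) (D : dpda Q A G) (c c' : config Q G n) x K :
  nth 0 (hist_step D c c' x) K <= nth 0 x K.
Proof.
rewrite /hist_step.
case: (topsym c.2) => [g|] //.
case: (delta D c.1 g) => [f|q [r|r g']] //.
case: ifP => // _; rewrite nth_set_nth /=; case: eqP => // ->; exact: leq_pred.
Qed.

Lemma hs_size (Q A G : finType) (n : nat) (D : dpda Q A G) (c c' : config Q G n) x :
  wf_dpda n D -> size x = n -> size (hist_step D c c' x) = n.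
Proof.
move=> Hwf Hs; rewrite /hist_step.
case: (topsym c.2) => [g|] //.
have := Hwf c.1 g.
case: (delta D c.1 g) => [f|q [r|r g']] // Hr.
case: ifP => // _; rewrite size_set_nth Hs; apply/maxn_idPr; lia.
Qed.

Lemma take_eqP (s t : seq nat) j : size s = size t ->
  (take j s = take j t <-> forall i, i < j -> nth 0 s i = nth 0 t i).
Proof.
move=> Hs; split.
  by move=> H i Hi; rewrite -(nth_take 0 Hi) H nth_take.
move=> H; apply: (eq_from_nth (x0 := 0)); first by rewrite !size_take Hs.
move=> i; rewrite size_take => Hi.
have Hij : i < j by move: Hi; case: (ltnP j (size s)) => H1 Hi //; lia.
by rewrite !nth_take // H.
Qed.

Lemma hs_take (Q A G : finType) (n : nat) (D : dpda Q A G) (c c' : config Q G n) x x' j :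
  wf_dpda n D -> size x = n -> size x' = n -> take j x = take j x' ->
  take j (hist_step D c c' x) = take j (hist_step D c c' x').
Proof.
move=> Hwf Hs Hs' Ht.
have Hsz : size x = size x' by rewrite Hs Hs'.
rewrite /hist_step.
case: (topsym c.2) => [g|] //.
have := Hwf c.1 g.
case: (delta D c.1 g) => [f|q [r|r g']] // Hr.
have Hn := (take_eqP j Hsz).1 Ht.
case: (leqP j (n - r)) => Hjr.
  have E1 : forall y, size y = n -> take j (if take (n - r + 1) y == take (n - r + 1) (toppos c'.2)
             then set_nth 0 y (n - r) (nth 0 y (n - r)).-1 else y) = take j y.
    move=> y Hy; case: ifP => // _.
    apply/take_eqP; first by rewrite size_set_nth Hy; apply/maxn_idPr; lia.
    move=> i Hi; rewrite nth_set_nth /=; case: eqP => // Hi'; lia.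
  by rewrite !E1.
have -> : take (n - r + 1) x = take (n - r + 1) x'.
  apply/take_eqP => // i Hi; apply: Hn; lia.
case: ifP => // _.
apply/take_eqP; first by rewrite !size_set_nth Hsz.
move=> i Hi; rewrite !nth_set_nth /= (Hn (n - r)) //; case: eqP => // _; exact: Hn.
Qed.

Lemma drop_zip (S T : Type) (s : seq S) (t : seq T) i :
  drop i (zip s t) = zip (drop i s) (drop i t).
Proof. by elim: i s t => [|i IH] [|a s] [|b t] //=; [case: (drop i t) | case: (drop i s)]. Qed.

Lemma drop_cons_rat (Q G : Type) n (R : run Q G n) i : i <= rlen R ->
  drop i (r0 R :: rs R) = rat R i :: drop i (rs R).
Proof.
case: i => [|i] Hi /=; first by rewrite drop0.
by rewrite /rat /= (drop_nth (r0 R)).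
Qed.

Lemma hist_sub (Q A G : finType) n (D : dpda Q A G) (R : run Q G n) i x : i <= rlen R ->
  hist D (subrun_from R i) x =
  foldr (fun st y => hist_step D st.1 st.2 y) x (drop i (zip (r0 R :: rs R) (rs R))).
Proof.
move=> Hi; rewrite /hist /subrun_from /= drop_zip drop_cons_rat //.
Qed.

Lemma rat_sub_last (Q G : Type) n (R : run Q G n) i : i <= rlen R ->
  rat (subrun_from R i) (rlen (subrun_from R i)) = rat R (rlen R).
Proof.
rewrite /rat /rlen /subrun_from /= size_drop => Hi.
case E: (size (rs R) - i) => [|d] /=.
  by have -> : i = size (rs R) by lia.
rewrite nth_drop.
case E2: (size (rs R)) => [|m]; first by lia.
rewrite /=; have -> : i + d = m by lia.
apply: set_nth_default; lia.
Qed.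

Lemma foldr_hs_size (Q A G : finType) n (D : dpda Q A G) (l : seq (config Q G n * config Q G n)) x :
  wf_dpda n D -> size x = n ->
  size (foldr (fun st y => hist_step D st.1 st.2 y) x l) = n.
Proof. move=> Hwf Hx; elim: l => [|st l IH] //=; exact: hs_size. Qed.

Lemma foldr_hs_take (Q A G : finType) n (D : dpda Q A G) (l : seq (config Q G n * config Q G n)) x x' j :
  wf_dpda n D -> size x = n -> size x' = n -> take j x = take j x' ->
  take j (foldr (fun st y => hist_step D st.1 st.2 y) x l) =
  take j (foldr (fun st y => hist_step D st.1 st.2 y) x' l).
Proof.
move=> Hwf Hx Hx' Ht; elim: l => [|st l IH] //=.
by apply: hs_take => //; apply: foldr_hs_size.
Qed.

Lemma upper_sub (Q A G : finType) n (D : dpda Q A G) (R : run Q G n) j i :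
  wf_dpda n D -> is_run D R -> i <= rlen R ->
  (upper D j (subrun_from R i) <->
   take (n - j) (hist D (subrun_from R i) (toppos (rat R (rlen R)).2)) =
   take (n - j) (toppos (rat R i).2)).
Proof.
move=> Hwf [Hne _] Hi.
have Hnem := Hne _ (leqnn _).
rewrite /upper rat_sub_last //; split.
  move=> H; apply: H; [exact: ne_toppos_pos | by []].
move=> H x Hx Htop; rewrite /in_top /= -H.
rewrite !hist_sub //; apply: foldr_hs_take => //.
- exact: pos_size Hx.
- exact: toppos_size.
Qed.

Lemma Y_step (Q A G : finType) n (D : dpda Q A G) (R : run Q G n) i x : i < rlen R ->
  hist D (subrun_from R i) x =
  hist_step D (rat R i) (rat R i.+1) (hist D (subrun_from R i.+1) x).
Proof.
move=> Hi; rewrite !hist_sub //; last exact: ltnW.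
move: Hi; rewrite /rlen => Hi.
rewrite (drop_nth (r0 R, r0 R)); last by rewrite size_zip /=; lia.
rewrite /= nth_zip_cond size_zip /=.
have -> : i < minn (size (rs R)).+1 (size (rs R)) by lia.
by [].
Qed.

Lemma Y_last (Q A G : finType) n (D : dpda Q A G) (R : run Q G n) x :
  hist D (subrun_from R (rlen R)) x = x.
Proof. by rewrite /hist /subrun_from /= drop_size. Qed.

Lemma Y_pos (Q A G : finType) n (D : dpda Q A G) (R : run Q G n) i :
  wf_dpda n D -> is_run D R -> i <= rlen R ->
  is_pos (rat R i).2 (hist D (subrun_from R i) (toppos (rat R (rlen R)).2)).
Proof.
move=> Hwf [Hne Hs].
suff H : forall d i, i + d = rlen R ->
  is_pos (rat R i).2 (hist D (subrun_from R i) (toppos (rat R (rlen R)).2)).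
  move=> Hi; apply: (H (rlen R - i)); lia.
elim=> [|d IH] i0 Hid.
  rewrite addn0 in Hid; subst i0; rewrite Y_last; exact: ne_toppos_pos (Hne _ (leqnn _)).
have Hi0 : i0 < rlen R by lia.
rewrite Y_step //; apply: hs_pos => //; first exact: Hs.
apply: IH; lia.
Qed.

Lemma subrun0 (Q G : Type) n (R : run Q G n) : subrun_from R 0 = R.
Proof. by case: R => r s; rewrite /subrun_from drop0. Qed.

Unset Implicit Arguments.

Theorem mainTheorem5 (Q A G : finType) (n : nat) (D : dpda Q A G)
  (k : nat) (R : run Q G n) :
  wf_dpda n D -> 1 <= k <= n -> is_run D R -> upper D k R ->
  (upper D k.-1 R <->
   (forall i, i <= rlen R -> upper D k (subrun_from R i) ->
      topsize k (r0 R).2 <= topsize k (rat R i).2)).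
Proof.
move=> Hwf Hk Hrun Hup.
have [Hne Hsucc] := Hrun.
set m := rlen R.
set a := fun i => toppos (rat R i).2.
set Y := fun i => hist D (subrun_from R i) (a m).
set K := n - k.
have HK : n - k.-1 = K.+1 by rewrite /K; lia.
have HKn : K < n by rewrite /K; lia.
have Hup_i : forall j i, i <= m -> (upper D j (subrun_from R i) <-> take (n - j) (Y i) = take (n - j) (a i)).
  move=> j i Hi; exact: upper_sub.
have Hpos : forall i, i <= m -> is_pos (rat R i).2 (Y i) by move=> i Hi; exact: Y_pos.
have HYs : forall i, i <= m -> size (Y i) = n by move=> i Hi; exact: pos_size (Hpos i Hi).
have Has : forall i, i <= m -> size (a i) = n by move=> i Hi; exact: toppos_size (Hne i Hi).
have Hstep : forall i, i < m -> Y i = hist_step D (rat R i) (rat R i.+1) (Y i.+1).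
  move=> i Hi; exact: Y_step.
have HYm : Y m = a m by rewrite /Y Y_last.
have Hts : forall i, i <= m -> topsize k (rat R i).2 = nth 0 (a i) K.
  move=> i Hi; exact: topsize_toppos (Hne i Hi) Hk.
have Hm0 : 0 <= m by [].
have S0 : take K (Y 0) = take K (a 0).
  by have := (Hup_i k 0 Hm0).1; rewrite subrun0 => /(_ Hup).
have Hle : forall i, i <= m -> take K (Y i) = take K (a i) -> nth 0 (Y i) K <= nth 0 (a i) K.
  move=> i Hi Ht; exact: pos_le (Hpos i Hi) Ht _.
have HE : forall i, i <= m -> (take K.+1 (Y i) = take K.+1 (a i) <->
    take K (Y i) = take K (a i) /\ nth 0 (Y i) K = nth 0 (a i) K).
  move=> i Hi; rewrite !(take_nth 0) ?HYs ?Has //; split.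
    by move/rcons_inj => [-> ->].
  by case=> -> ->.
have Hup1 : upper D k.-1 R <-> nth 0 (Y 0) K = nth 0 (a 0) K.
  rewrite -{1}(subrun0 R) (Hup_i _ 0 Hm0) HK (HE 0 Hm0); split; first by case.
  by move=> H; split.
rewrite Hup1 (_ : r0 R = rat R 0) // (Hts 0 Hm0); split.
  move=> H0 i Hi Hui.
  have Ht := (Hup_i k i Hi).1 Hui.
  rewrite (Hts i Hi) -H0.
  apply: leq_trans (Hle i Hi Ht).
  have Hmon : forall i, i <= m -> nth 0 (Y 0) K <= nth 0 (Y i) K.
    elim=> [|j IH] Hj //.
    apply: leq_trans (IH (ltnW Hj)) _.
    rewrite (Hstep j Hj); exact: hs_nth_le.
  exact: Hmon.
move=> H.
have Claim : forall d i, i + d = m -> exists j, [/\ i <= j <= m,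
    take K (Y j) = take K (a j) & nth 0 (a j) K <= nth 0 (Y i) K].
  elim=> [|d IH] i Hid.
    rewrite addn0 in Hid; subst i; exists m; rewrite HYm leqnn; split => //.
  have Him : i < m by lia.
  have [j [Hj1 Hj2 Hj3]] := IH i.+1 (etrans (addSnnS _ _) Hid).
  have Hsi := Hsucc i Him.
  case: (hs_cases (Y i.+1) Hwf Hsi) => [Heq | [r [g [Hr Hpush Htk Hset]]]].
    exists j; split => //; first by move: Hj1; clear; lia.
    by rewrite Hstep // Heq.
  case: (eqVneq (n - r) K) => HrK.
    have [Ht1 Ht2] := push_top Hr Hpush.
    rewrite HrK addn1 in Ht1 Ht2 Htk Hset.
    have Hnth : nth 0 (Y i.+1) K = nth 0 (a i.+1) K.
      by rewrite -(nth_take 0 (ltnSn K)) Htk nth_take.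
    have Htk' : take K (Y i.+1) = take K (a i.+1).
      by rewrite -(take_takel _ (leqnSn K)) Htk take_takel.
    have Hil : i <= m by apply: ltnW.
    exists i; split.
    - by rewrite leqnn Hil.
    - rewrite Hstep // Hset; apply/take_eqP.
        by rewrite size_set_nth HYs // Has //; apply/maxn_idPr.
      move=> l Hl; rewrite nth_set_nth /= (ltn_eqF Hl).
      by move: l Hl; apply/take_eqP; [rewrite HYs // Has | rewrite Htk' Ht1].
    - by rewrite Hstep // Hset nth_set_nth /= eqxx Hnth Ht2.
  exists j; split => //; first by move: Hj1; clear; lia.
  rewrite Hstep // Hset nth_set_nth /= eq_sym (negbTE HrK); exact: Hj3.
have [j [Hj1 Hj2 Hj3]] := Claim m 0 (add0n m).
have Hjm : j <= m by case/andP: Hj1.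
have := H j Hjm ((Hup_i k j Hjm).2 Hj2); rewrite (Hts j Hjm) => H1.
apply/eqP; rewrite eqn_leq Hle //=; exact: leq_trans H1 Hj3.
Qed.
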